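(* Let $V$ be a finite set with nonnegative symmetric similarity scores $w_{ij}$ ($i\ne j$) satisfying the triangle inequality $w_{ij}\le w_{ik}+w_{kj}$ for all distinct $i,j,k\in V$. For a rooted binary tree $T$ whose leaves are in bijection with $V$, let $cost_T(V)=\sum_{\{i,j\}\subseteq V}w_{ij}\,|\mathrm{leaves}(T[i\vee j])|$. Then for every such tree $T$, $cost_T(V)\le 2\min_{T'}cost_{T'}(V)$, the minimum being over all such trees $T'$.
   Context: $T[i\vee j]$ denotes the subtree of $T$ rooted at the least common ancestor of the leaves $i$ and $j$, and $|\mathrm{leaves}(T[i\vee j])|$ is its number of leaves. The sum is over unordered pairs of distinct elements. *)

(* Defs.v *)
From mathcomp Require Import all_boot all_order all_algebra.
Set Implicit Arguments. Unset Strict Implicit. Unset Printing Implicit Defensive.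
Import Order.TTheory GRing.Theory Num.Theory.

Inductive btree (V : Type) : Type :=
| Leaf of V
| Node of btree V & btree V.
Arguments Leaf {V} _.
Arguments Node {V} _ _.

Fixpoint leaves {V : Type} (t : btree V) : seq V :=
  match t with
  | Leaf v => [:: v]
  | Node l r => leaves l ++ leaves r
  end.

Definition leaf_bij {V : finType} (t : btree V) : bool :=
  uniq (leaves t) && all (fun v => v \in leaves t) (enum V).

(* |leaves(T[i \/ j])| : number of leaves of the subtree rooted at the
   least common ancestor of leaves i and j. *)
Fixpoint lca_size {V : eqType} (t : btree V) (i j : V) : nat :=
  match t with
  | Leaf _ => 1
  | Node l r =>
      if (i \in leaves l) && (j \in leaves l) then lca_size l i j
      else if (i \in leaves r) && (j \in leaves r) then lca_size r i j
      else size (leaves l ++ leaves r)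
  end.

(* cost_T(V) = sum over unordered pairs {i,j} of distinct elements of
   w i j * |leaves(T[i \/ j])|; each unordered pair is counted once via
   enum_rank i < enum_rank j. *)
Definition cost {R : pzRingType} {V : finType} (w : V -> V -> R) (t : btree V) : R :=
  \sum_(i : V) \sum_(j : V | (enum_rank i < enum_rank j)%N)
     (w i j * (lca_size t i j)%:R)%R.

(* Main.v *)
Require Import Defs.
From mathcomp Require Import all_boot all_order all_algebra.
From mathcomp Require Import ring lra.
Import Order.TTheory GRing.Theory Num.Theory.
Local Open Scope ring_scope.

Section Aux.
Variables (R : realFieldType) (V : finType) (w : V -> V -> R).
Hypothesis w_ge0 : forall i j : V, i != j -> 0 <= w i j.
Hypothesis w_tri : forall i j k : V, i != j -> j != k -> i != k ->
             w i j <= w i k + w k j.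

Definition Wsum (A : seq V) := \sum_(i <- A) \sum_(j <- A | i != j) w i j.
Definition Cr (A B : seq V) := \sum_(i <- A) \sum_(j <- B) w i j.
Definition Dsum (t : btree V) := \sum_(i <- leaves t) \sum_(j <- leaves t | i != j)
   w i j * (lca_size t i j)%:R.

Lemma sum_const_seq (B : seq V) (x : R) : \sum_(j <- B) x = (size B)%:R * x.
Proof.
elim: B => [|b B IH]; first by rewrite big_nil mul0r.
by rewrite big_cons IH /= -addn1 natrD; ring.
Qed.

Lemma sum_drop_filter (r : seq V) (P : pred V) (f : V -> R) :
  (forall x, x \in r -> 0 <= f x) ->
  \sum_(x <- r | P x) f x <= \sum_(x <- r) f x.
Proof.
move=> f0; rewrite big_mkcond /= !big_seq; apply: ler_sum => x xr.
by case: (P x) => //; exact: f0.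
Qed.

Lemma tri_sum (A B : seq V) : (forall x, x \in A -> x \notin B) ->
  (size B)%:R * Wsum A <= (size A)%:R * (Cr A B + Cr B A).
Proof.
move=> dAB.
have nAB : forall x y, x \in A -> y \in B -> x != y.
  by move=> x y xA yB; apply/eqP => exy; subst; move: (dAB _ xA); rewrite yB.
rewrite /Wsum mulr_sumr.
apply: (@le_trans _ _ (\sum_(i <- A) \sum_(i' <- A) \sum_(j <- B) (w i j + w j i'))).
  rewrite big_seq [X in _ <= X]big_seq; apply: ler_sum => i iA.
  rewrite mulr_sumr.
  apply: (@le_trans _ _ (\sum_(i' <- A | i != i') \sum_(j <- B) (w i j + w j i'))).
    rewrite big_seq_cond [X in _ <= X]big_seq_cond; apply: ler_sum => i' /andP[i'A ii'].
    rewrite -sum_const_seq big_seq [X in _ <= X]big_seq; apply: ler_sum => j jB.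
    apply: w_tri => //; [exact: nAB | exact: nAB].
  apply: sum_drop_filter => i' i'A; rewrite big_seq; apply: sumr_ge0 => j jB.
  by rewrite addr_ge0 // w_ge0 // ?(nAB _ _ iA jB) // eq_sym (nAB _ _ i'A jB).
under eq_bigr do under eq_bigr do rewrite big_split /=.
under eq_bigr do rewrite big_split /=.
rewrite big_split /= mulrDr; apply: lerD; rewrite le_eqVlt; apply/orP; left; apply/eqP.
idtac.
  rewrite /Cr mulr_sumr; apply: eq_bigr => i _; exact: sum_const_seq.
rewrite sum_const_seq /Cr exchange_big /=.
by congr (_ * _); apply: eq_bigr => i _; rewrite exchange_big.
Qed.


Lemma drop_neq (i : V) (B : seq V) (f : V -> R) : i \notin B ->
  \sum_(j <- B | i != j) f j = \sum_(j <- B) f j.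
Proof.
move=> iB; rewrite big_seq_cond [RHS]big_seq; apply: eq_bigl => j.
case jB: (j \in B) => //=; apply/negP => /eqP eij; subst; by rewrite jB in iB.
Qed.

Lemma Wsum_cat (A B : seq V) : (forall x, x \in A -> x \notin B) ->
  Wsum (A ++ B) = Wsum A + Wsum B + Cr A B + Cr B A.
Proof.
move=> dAB.
have dBA : forall x, x \in B -> x \notin A.
  by move=> x xB; apply/negP => xA; move: (dAB _ xA); rewrite xB.
rewrite /Wsum /Cr big_cat /=.
have E1 : \sum_(i <- A) \sum_(j <- A ++ B | i != j) w i j =
   \sum_(i <- A) \sum_(j <- A | i != j) w i j + \sum_(i <- A) \sum_(j <- B) w i j.
  rewrite -big_split /= big_seq [RHS]big_seq; apply: eq_bigr => i iA.
  by rewrite big_cat /= (drop_neq _ _ _ (dAB _ iA)).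
have E2 : \sum_(i <- B) \sum_(j <- A ++ B | i != j) w i j =
   \sum_(i <- B) \sum_(j <- B | i != j) w i j + \sum_(i <- B) \sum_(j <- A) w i j.
  rewrite -big_split /= big_seq [RHS]big_seq; apply: eq_bigr => i iB.
  by rewrite big_cat /= (drop_neq _ _ _ (dBA _ iB)) addrC.
rewrite E1 E2 /=; ring.
Qed.

Lemma lca_sym (t : btree V) i j : lca_size t i j = lca_size t j i.
Proof.
elim: t => //= l IHl r IHr.
by rewrite IHl IHr (andbC (j \in leaves l)) (andbC (j \in leaves r)).
Qed.

Lemma lca_le (t : btree V) i j : (lca_size t i j <= size (leaves t))%N.
Proof.
elim: t => //= l IHl r IHr; rewrite size_cat.
case: ifP => _; first exact: leq_trans IHl (leq_addr _ _).
case: ifP => _ //; exact: leq_trans IHr (leq_addl _ _).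
Qed.


Lemma Dsum_node (l r : btree V) :
  (forall x, x \in leaves l -> x \notin leaves r) ->
  Dsum (Node l r) = Dsum l + Dsum r +
    (size (leaves l) + size (leaves r))%:R *
      (Cr (leaves l) (leaves r) + Cr (leaves r) (leaves l)).
Proof.
move=> dAB.
have dBA : forall x, x \in leaves r -> x \notin leaves l.
  by move=> x xB; apply/negP => xA; move: (dAB _ xA); rewrite xB.
set n := (size (leaves l) + size (leaves r))%:R.
rewrite /Dsum /Cr [leaves (Node l r)]/= big_cat.
have E1 : \sum_(i <- leaves l) \sum_(j <- leaves l ++ leaves r | i != j)
      w i j * (lca_size (Node l r) i j)%:R =
   \sum_(i <- leaves l) \sum_(j <- leaves l | i != j) w i j * (lca_size l i j)%:R
   + n * \sum_(i <- leaves l) \sum_(j <- leaves r) w i j.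
  rewrite mulr_sumr -big_split /= big_seq [RHS]big_seq; apply: eq_bigr => i iA.
  rewrite big_cat (drop_neq _ _ _ (dAB _ iA)).
  have P1 : \sum_(j <- leaves l | i != j) w i j * (lca_size (Node l r) i j)%:R
     = \sum_(j <- leaves l | i != j) w i j * (lca_size l i j)%:R.
    rewrite big_seq_cond [RHS]big_seq_cond; apply: eq_bigr => j /andP[jA _].
    by rewrite /= iA jA.
  have P2 : \sum_(j <- leaves r) w i j * (lca_size (Node l r) i j)%:R
     = n * \sum_(j <- leaves r) w i j.
    rewrite mulr_sumr !big_seq; apply: eq_bigr => j jB.
    rewrite /= iA (negbTE (dBA _ jB)) (negbTE (dAB _ iA)) /= size_cat /n.
    by rewrite mulrC.
  by rewrite P1 P2.
have E2 : \sum_(i <- leaves r) \sum_(j <- leaves l ++ leaves r | i != j)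
      w i j * (lca_size (Node l r) i j)%:R =
   \sum_(i <- leaves r) \sum_(j <- leaves r | i != j) w i j * (lca_size r i j)%:R
   + n * \sum_(i <- leaves r) \sum_(j <- leaves l) w i j.
  rewrite mulr_sumr -big_split /= big_seq [RHS]big_seq; apply: eq_bigr => i iB.
  rewrite big_cat (drop_neq _ _ _ (dBA _ iB)).
  have P1 : \sum_(j <- leaves r | i != j) w i j * (lca_size (Node l r) i j)%:R
     = \sum_(j <- leaves r | i != j) w i j * (lca_size r i j)%:R.
    rewrite big_seq_cond [RHS]big_seq_cond; apply: eq_bigr => j /andP[jB _].
    by rewrite /= (negbTE (dBA _ iB)) iB jB.
  have P2 : \sum_(j <- leaves l) w i j * (lca_size (Node l r) i j)%:R
     = n * \sum_(j <- leaves l) w i j.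
    rewrite mulr_sumr !big_seq; apply: eq_bigr => j jA.
    rewrite /= (negbTE (dBA _ iB)) iB (negbTE (dAB _ jA)) /= size_cat /n.
    by rewrite mulrC.
  by rewrite P1 P2 addrC.
rewrite E1 E2 /=; ring.
Qed.

Lemma tree_bound (t : btree V) : uniq (leaves t) ->
  (size (leaves t))%:R * Wsum (leaves t) <= 2 * Dsum t.
Proof.
elim: t => [v|l IHl r IHr].
  move=> _; rewrite /Wsum /Dsum /= !big_cons !big_nil /=.
  by rewrite eqxx /= !addr0 !mulr0.
rewrite [leaves _]/= cat_uniq => /and3P[ul hlr ur].
have dAB : forall x, x \in leaves l -> x \notin leaves r.
  move=> x xA; apply/negP => xB; move/hasPn: hlr => /(_ x xB) /=.
  by rewrite xA.
have dBA : forall x, x \in leaves r -> x \notin leaves l.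
  by move=> x xB; apply/negP => xA; move: (dAB _ xA); rewrite xB.
rewrite Dsum_node // [leaves _]/= Wsum_cat // size_cat natrD.
have H1 := IHl ul; have H2 := IHr ur.
have H3 := tri_sum _ _ dAB; have H4 := tri_sum _ _ dBA.
move: H1 H2 H3 H4.
set a := (size (leaves l))%:R; set b := (size (leaves r))%:R.
set WA := Wsum (leaves l); set WB := Wsum (leaves r).
set C1 := Cr (leaves l) (leaves r); set C2 := Cr (leaves r) (leaves l).
set DA := Dsum l; set DB := Dsum r.
move=> H1 H2 H3 H4.
rewrite -subr_ge0.
have -> : 2 * (DA + DB + (a + b) * (C1 + C2)) - (a + b) * (WA + WB + C1 + C2) =
  (2 * DA - a * WA) + (2 * DB - b * WB) + (a * (C1 + C2) - b * WA)
  + (b * (C2 + C1) - a * WB) by ring.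
apply: addr_ge0; first apply: addr_ge0; first apply: addr_ge0.
all: by rewrite subr_ge0.
Qed.


End Aux.

Lemma sym_sum (R : realFieldType) (V : finType) (g : V -> V -> R) :
  (forall i j, i != j -> g i j = g j i) ->
  \sum_(i : V) \sum_(j : V | i != j) g i j =
  2 * \sum_(i : V) \sum_(j : V | (enum_rank i < enum_rank j)%N) g i j.
Proof.
move=> gs.
under eq_bigr => i _ do rewrite (bigID (fun j => (enum_rank i < enum_rank j)%N)) /=.
rewrite big_split /= (_ : forall x : R, 2 * x = x + x); last by move=> x; ring.
congr (_ + _).
  apply: eq_bigr => i _; apply: eq_bigl => j.
  case: ltnP => h /=; rewrite ?andbT ?andbF //; apply/eqP => eij; subst.
  by rewrite ltnn in h.
have -> : \sum_(i : V) \sum_(j : V | (i != j) && ~~ (enum_rank i < enum_rank j)%N) g i j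
   = \sum_(i : V) \sum_(j : V | (enum_rank j < enum_rank i)%N) g i j.
  apply: eq_bigr => i _; apply: eq_bigl => j.
  rewrite -leqNgt leq_eqVlt.
  case: (boolP (i == j)) => [/eqP -> | nij] /=; first by rewrite ltnn ?eqxx ?andbF.
  rewrite (_ : (nat_of_ord (enum_rank j) == nat_of_ord (enum_rank i)) = false) //.
  by apply/negbTE; apply: contra nij => /eqP /val_inj /enum_rank_inj ->.
under eq_bigr do rewrite big_mkcond /=.
rewrite exchange_big /=.
apply: eq_bigr => j _; rewrite big_mkcond /=; apply: eq_bigr => i _.
case: ltnP => // h; apply: gs; apply/eqP => eij; subst; by rewrite ltnn in h.
Qed.

Theorem mainTheorem14 (R : realFieldType) (V : finType) (w : V -> V -> R)
  (w_ge0 : forall i j : V, i != j -> 0 <= w i j)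
  (w_sym : forall i j : V, i != j -> w i j = w j i)
  (w_tri : forall i j k : V, i != j -> j != k -> i != k ->
             w i j <= w i k + w k j)
  (T : btree V) (hT : leaf_bij T) :
  forall T' : btree V, leaf_bij T' -> cost w T <= 2 * cost w T'.
Proof.
move=> T' hT'.
have memL : forall (t : btree V) (x : V), leaf_bij t -> x \in leaves t.
  by move=> t x; rewrite /leaf_bij => /andP[_ /allP a]; apply: a; rewrite mem_enum.
have sumV : forall (t : btree V) (F : V -> R), leaf_bij t ->
    \sum_(i <- leaves t) F i = \sum_(i : V) F i.
  move=> t F ht; rewrite big_uniq; last by move: ht; rewrite /leaf_bij => /andP[].
  by apply: eq_bigl => i; rewrite memL.
have sumV2 : forall (t : btree V) (P : pred V) (F : V -> R), leaf_bij t ->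
    \sum_(i <- leaves t | P i) F i = \sum_(i : V | P i) F i.
  by move=> t P F ht; rewrite big_mkcond sumV // [RHS]big_mkcond.
have DV : forall t : btree V, leaf_bij t -> Dsum _ _ w t =
    \sum_(i : V) \sum_(j : V | i != j) w i j * (lca_size t i j)%:R.
  move=> t ht; rewrite /Dsum sumV //; apply: eq_bigr => i _; exact: sumV2.
have WV : forall t : btree V, leaf_bij t -> Wsum _ _ w (leaves t) =
    \sum_(i : V) \sum_(j : V | i != j) w i j.
  move=> t ht; rewrite /Wsum sumV //; apply: eq_bigr => i _; exact: sumV2.
have key : forall t : btree V, leaf_bij t -> Dsum _ _ w t = 2 * cost w t.
  move=> t ht; rewrite DV // /cost sym_sum // => i j ij.
  by rewrite w_sym // lca_sym.
have up : Dsum _ _ w T <= (size (leaves T))%:R * Wsum _ _ w (leaves T).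
  rewrite /Dsum /Wsum mulr_sumr; apply: ler_sum => i _.
  rewrite mulr_sumr; apply: ler_sum => j ij.
  rewrite [X in _ <= X]mulrC; apply: ler_wpM2l; first exact: w_ge0.
  by rewrite ler_nat; exact: lca_le.
have sz : size (leaves T) = size (leaves T').
  apply: perm_size; apply: uniq_perm.
  - by move: hT; rewrite /leaf_bij => /andP[].
  - by move: hT'; rewrite /leaf_bij => /andP[].
  - by move=> x; rewrite !memL.
have uT' : uniq (leaves T') by move: hT'; rewrite /leaf_bij => /andP[].
have low := tree_bound _ _ _ w_ge0 w_tri T' uT'.
rewrite key // WV // in up.
rewrite key // WV // -sz in low.
have H : 2 * cost w T <= 2 * (2 * cost w T') := le_trans up low.
by rewrite ler_pM2l // in H.
Qed.
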